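(* Let $G$ be a cop-win graph on $n\geq 7$ vertices and let $m\geq 1$. Then $\mathrm{capt}(G,m)\leq (m-1)\,\mathrm{diam}(G)+m(n-4)$.
   Context: All graphs are finite, simple, connected and reflexive (every vertex is considered adjacent to itself, so a player may stay in place). The game of $k$ cops and $m$ robbers on $G$: in round 0 the cops first choose starting vertices, then the robbers choose theirs. In each round $i\geq 1$, all $k$ cops move (each to an adjacent vertex or staying), then all $m$ robbers move likewise. Several players may occupy the same vertex. Whenever a cop and some robbers occupy the same vertex, those robbers are captured and take no further part in the game. Both sides have full information. The cops win if all robbers are captured after finitely many rounds. $G$ is $k$-cop-win if $k$ cops can always win against one robber (cop-win means $1$-cop-win). For a $k$-cop-win graph $G$ and $\ell\geq k$, $\mathrm{capt}_\ell(G,m)$ is the index of the round in which the last robber is captured when $\ell$ cops play to minimize this index and $m$ robbers play to maximize it; $\mathrm{capt}(G,m)=\mathrm{capt}_1(G,m)$. $\mathrm{diam}(G)$ is the diameter of $G$. *)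

(* Defs.v *)
From mathcomp Require Import all_boot.
Set Implicit Arguments. Unset Strict Implicit. Unset Printing Implicit Defensive.

Section CopsRobbers.
Variables (T : finType) (e : rel T).

Definition adj (x y : T) : bool := (x == y) || e x y.

(* Walk of exactly k steps in the reflexive graph, i.e. distance <= k. *)
Definition within (k : nat) (x y : T) : bool :=
  [exists p : k.-tuple T, path adj x p && (last x p == y)].

(* Graph distance: least k with y within k steps of x
   (for connected graphs it is < #|T|). *)
Definition dist (x y : T) : nat := find (fun k => within k x y) (iota 0 #|T|).

Definition diam : nat := \max_(x : T) \max_(y : T) dist x y.

(* Positions of the m robbers; None = already captured. *)
Definition capture (m : nat) (c : T) (R : 'I_m -> option T) : 'I_m -> option T :=
  fun i => if R i == Some c then None else R i.

Definition robber_move (m : nat) (R R2 : 'I_m -> option T) : Prop :=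
  forall i, match R i with
            | None => R2 i = None
            | Some v => exists2 w, R2 i = Some w & adj v w
            end.

(* cop_wins_within k c R : it is the cop's turn, cop at c, robbers at R
   (none on c); the cop can force capture of all robbers within k more rounds. *)
Inductive cop_wins_within (m : nat) : nat -> T -> ('I_m -> option T) -> Prop :=
| cww_done k c R : (forall i, R i = None) -> cop_wins_within k c R
| cww_step k c R c' : adj c c' ->
    (forall R2, robber_move (capture c' R) R2 ->
       cop_wins_within k c' (capture c' R2)) ->
    cop_wins_within k.+1 c R.

(* Round 0: cop places,
   then robbers place (robbers placed on the cop are captured in round 0). *)
Definition capt_le (m N : nat) : Prop :=
  exists c0 : T, forall R0 : 'I_m -> T,
    cop_wins_within N c0 (capture c0 (fun i => Some (R0 i))).

Definition copwin : Prop := exists N, capt_le 1 N.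

End CopsRobbers.

(* Main.v *)
Require Import Defs.
From mathcomp Require Import all_boot zify.
Set Implicit Arguments. Unset Strict Implicit. Unset Printing Implicit Defensive.


Lemma eqSome (T : eqType) (a b : T) : (Some a == Some b) = (a == b).
Proof. by []. Qed.

Section Gen.
Variables (T : finType) (e : rel T).

Fixpoint Wn (k : nat) (c r : T) : bool :=
  if k is k'.+1 then
    [exists c', adj e c c' &&
       ((c' == r) || [forall r', adj e r r' ==> ((r' == c') || Wn k' c' r')])]
  else false.

Lemma WnS k c r : Wn k.+1 c r =
    [exists c', adj e c c' &&
       ((c' == r) || [forall r', adj e r r' ==> ((r' == c') || Wn k c' r')])].
Proof. by []. Qed.

Lemma adjxx x : adj e x x. Proof. by rewrite /adj eqxx. Qed.

Lemma Wn_adj k c r : adj e c r -> Wn k.+1 c r.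
Proof. by move=> H; apply/existsP; exists r; rewrite H eqxx. Qed.

Definition captW k := exists c0, forall r, r != c0 -> Wn k c0 r.

Lemma Wn_sound k c r (R : 'I_1 -> option T) :
  Wn k c r -> (forall i, R i = Some r) -> cop_wins_within e k c R.
Proof.
elim: k c r R => [//|k IH] c r R /existsP[c' /andP[Hc H]] HR.
apply: (@cww_step _ _ _ k c R c') => // R2 Hmv.
have [Ecr|Ncr] := eqVneq c' r.
  apply: cww_done => i; have := Hmv i.
  by rewrite /capture HR Ecr eqxx => ->.
have := Hmv ord0; rewrite /capture HR eqSome eq_sym (negbTE Ncr) => -[w Hw Hrw].
move: H; rewrite (negbTE Ncr) /= => /forallP /(_ w); rewrite Hrw /=.
have [Ewc|Nwc] := eqVneq w c'.
  move=> _; apply: cww_done => i; by rewrite /capture (ord1 i) Hw Ewc eqxx.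
move=> /= HW; apply: (IH c' w) => // i.
by rewrite /capture (ord1 i) Hw eqSome (negbTE Nwc).
Qed.

Lemma Wn_complete k c (R : 'I_1 -> option T) :
  cop_wins_within e k c R -> forall r, (forall i, R i = Some r) -> Wn k c r.
Proof.
elim=> {k c R} [k c R HN r HR | k c R c' Hc Hall IH r HR].
  by have := HN ord0; rewrite HR.
rewrite WnS; apply/existsP; exists c'; rewrite Hc andTb.
have [->|Ncr] := eqVneq c' r; first by [].

apply/orP; right; apply/forallP => r'; apply/implyP => Hr.
have [->|Nrc] := eqVneq r' c'; first by [].
rewrite (IH (fun _ => Some r')) ?orbT //.
  by move=> i; rewrite /capture HR eqSome eq_sym (negbTE Ncr); exists r'.
by move=> i; rewrite /capture eqSome (negbTE Nrc).
Qed.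

Lemma capt_le_captW N : capt_le e 1 N -> captW N.
Proof.
case=> c0 H; exists c0 => r Hr.
apply: (Wn_complete (H (fun _ => r))) => i.
by rewrite /capture eqSome (negbTE Hr).
Qed.

Lemma captW_capt_le N : captW N -> capt_le e 1 N.
Proof.
case=> c0 H; exists c0 => R0.
have [Hr|Hr] := eqVneq (R0 ord0) c0.
  by apply: cww_done => i; rewrite /capture (ord1 i) eqSome Hr eqxx.
by apply: (Wn_sound (H _ Hr)) => i; rewrite /capture (ord1 i) eqSome (negbTE Hr).
Qed.

Lemma Wn_fix K : (forall c r, Wn K.+1 c r = Wn K c r) ->
  forall k c r, Wn k c r -> Wn K c r.
Proof.
move=> HK; elim=> [//|k IH] c r /existsP[c' /andP[Hc H]].
rewrite -HK; rewrite WnS; apply/existsP; exists c'; rewrite Hc andTb.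
case/orP: H => [->//|/forallP H]; apply/orP; right; apply/forallP=> r'.
apply/implyP=> Hr; case/orP: (implyP (H r') Hr) => [->//|/IH ->].
by rewrite orbT.
Qed.

Definition corner v u := (v != u) && [forall w, adj e v w ==> adj e u w].

Lemma corner_exists K : captW K -> 1 < #|T| -> exists v u, corner v u.
Proof.
case=> c0 Hc0 HT.
case: (boolP [exists v, exists u, corner v u]) => [/existsP[v /existsP[u H]]|Hn].
  by exists v, u.
have Hnc : forall v u, v != u -> exists2 w, adj e v w & ~~ adj e u w.
  move=> v u Hvu; move: Hn; rewrite negb_exists => /forallP /(_ v).
  rewrite negb_exists => /forallP /(_ u).
  rewrite /corner Hvu /= negb_forall => /existsP[w]; rewrite negb_imply.
  by case/andP=> ? ?; exists w.
have Hesc : forall k c r, ~~ adj e c r -> ~~ Wn k c r.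
  elim=> [//|k IH] c r Hcr; rewrite WnS; apply/negP => /existsP[c' /andP[Hc H]].
  have Hrc : r != c'.
    by apply/negP => /eqP Er; rewrite Er Hc in Hcr.
  case/orP: H => [/eqP Ec|/forallP H]; first by rewrite Ec eqxx in Hrc.
  have [w Hw1 Hw2] := Hnc _ _ Hrc.
  case/orP: (implyP (H w) Hw1) => [/eqP Ew|Hw].
    by rewrite Ew adjxx in Hw2.
  by rewrite (negbTE (IH _ _ Hw2)) in Hw.
case: (boolP [exists r, ~~ adj e c0 r]) => [/existsP[r Hr]|Hall].
  have Hr0 : r != c0 by apply/negP => /eqP Er; rewrite Er adjxx in Hr.
  by have := Hc0 r Hr0; rewrite (negbTE (Hesc _ _ _ Hr)).
have : 0 < #|predC1 c0| by rewrite cardC1; case: #|T| HT.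
case/card_gt0P => v Hv; exists v, c0.
rewrite /corner; move: Hv; rewrite inE => -> /=.
apply/forallP => w; apply/implyP => _.
by move: Hall; rewrite negb_exists => /forallP /(_ w); rewrite negbK.
Qed.

End Gen.


Section Sub.
Variables (T : finType) (e : rel T) (v u : T).
Hypothesis esym : symmetric e.
Hypothesis Hcor : corner e v u.

Local Notation sT := {x : T | x != v}.
Definition eH : rel sT := fun x y => e (val x) (val y).

Lemma adjH (x y : sT) : adj eH x y = adj e (val x) (val y).
Proof. by rewrite /adj /eH val_eqE. Qed.

Lemma symH : symmetric eH.
Proof. by move=> x y; rewrite /eH esym. Qed.

Lemma adj_sym x y : adj e x y = adj e y x.
Proof. by rewrite /adj eq_sym esym. Qed.

Lemma Huv : u != v. Proof. by case/andP: Hcor; rewrite eq_sym. Qed.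
Lemma Hdom w : adj e v w -> adj e u w.
Proof. by case/andP: Hcor => _ /forallP /(_ w) /implyP. Qed.

Definition u' : sT := Sub u Huv.
Definition f (x : T) : sT := insubd u' x.

Lemma val_f x : val (f x) = if x != v then x else u.
Proof. by rewrite /f val_insubd. Qed.

Lemma f_val (x : sT) : f (val x) = x.
Proof. by apply: val_inj; rewrite val_f (valP x). Qed.

Lemma fhom x y : adj e x y -> adj eH (f x) (f y).
Proof.
rewrite adjH !val_f.
case: (eqVneq x v) => [->|Hx]; case: (eqVneq y v) => [->|Hy] /=.
- by move=> _; rewrite adjxx.
- exact: Hdom.
- by rewrite adj_sym => /Hdom; rewrite adj_sym.
- by [].
Qed.

Lemma card_sT : #|{: sT}| = #|T|.-1.
Proof. by rewrite card_sig -(cardC1 v); apply: eq_card => x; rewrite !inE. Qed.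

Lemma retractW k (c : T) (r : sT) : Wn e k c (val r) -> Wn eH k (f c) r.
Proof.
elim: k c r => [//|k IH] c r; rewrite WnS => /existsP[c' /andP[Hc H]].
rewrite WnS; apply/existsP; exists (f c'); rewrite (fhom Hc) andTb.
case/orP: H => [/eqP ->|/forallP H]; first by rewrite f_val eqxx.
apply/orP; right; apply/forallP => r'; apply/implyP; rewrite adjH => Hr.
case/orP: (implyP (H (val r')) Hr) => [/eqP <-|/IH ->]; last by rewrite orbT.
by rewrite f_val eqxx.
Qed.

Lemma shadowW k (c : sT) (r : T) : Wn eH k c (f r) -> Wn e k.+1 (val c) r.
Proof.
elim: k c r => [//|k IH] c r; rewrite WnS => /existsP[c' /andP[Hc H]].
rewrite WnS; apply/existsP; exists (val c'); rewrite -adjH Hc andTb.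
have [->|Er] := eqVneq (val c') r; first by [].
apply/orP; right; apply/forallP => r'; apply/implyP => Hr.
have [->|Er'] := eqVneq r' (val c'); first by [].
rewrite orFb.
case/orP: H => [/eqP Ec | /forallP H].
  move: Er; rewrite Ec val_f; case: (eqVneq r v) => [Erv|]; last by rewrite eqxx.
  move=> _; apply: Wn_adj; apply: Hdom; by rewrite -Erv.
case/orP: (implyP (H (f r')) (fhom Hr)) => [/eqP Efc | Hw]; last exact: IH.
move: Er'; rewrite -Efc val_f; case: (eqVneq r' v) => [->|]; last by rewrite eqxx.
move=> _; apply: Wn_adj; apply: Hdom; exact: adjxx.
Qed.

Lemma captW_shadow k : captW eH k -> captW e k.+1.
Proof.
case=> c0 Hc0; exists (val c0) => r Hr.
have [Ef|Nf] := eqVneq (f r) c0; last by apply: shadowW; apply: Hc0.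
move: Hr; rewrite -Ef val_f; case: (eqVneq r v) => [->|]; last by rewrite eqxx.
move=> _; apply: Wn_adj; apply: Hdom; exact: adjxx.
Qed.

Lemma captW_retract k : captW e k -> captW eH k.
Proof.
case=> c0 Hc0; exists (f c0) => r Hr; apply: retractW; apply: Hc0.
by apply: contra Hr => /eqP <-; rewrite f_val.
Qed.

End Sub.

Definition look (t : seq (seq bool)) i j := nth false (nth [::] t i) j.
Definition adjn (g : nat -> nat -> bool) i j := (i == j) || g i j.
Fixpoint orrow (a b : seq bool) : seq bool :=
  match a, b with x :: a', y :: b' => (x || y) :: orrow a' b' | _, _ => [::] end.
Fixpoint all3 (a b c : seq bool) : bool :=
  match a, b, c with
  | x :: a', y :: b', z :: c' => (x ==> (y || z)) && all3 a' b' c'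
  | _, _, _ => true end.
Fixpoint unitv (n i : nat) : seq bool :=
  match n with
  | 0 => [::]
  | n'.+1 => if i is i'.+1 then false :: unitv n' i' else true :: nseq n' false
  end.
Definition idm n := [seq unitv n i | i <- iota 0 n].
Fixpoint foldrow (arow : seq bool) (U : seq (seq bool)) (acc : seq bool) : seq bool :=
  match arow, U with
  | a :: ar, u :: U' => foldrow ar U' (if a then orrow u acc else acc)
  | _, _ => acc end.
Definition fstep (A I T : seq (seq bool)) (z : seq bool) :=
  let S := [seq [seq all3 ar p.1 p.2 | ar <- A] | p <- zip I T] in
  let U := [seq orrow p.1 p.2 | p <- zip I S] in
  [seq foldrow ac U z | ac <- A].
Definition fW A n k :=
  iter k (fun T => fstep A (idm n) T (nseq n false)) (nseq n (nseq n false)).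
Definition captTab n t :=
  has (fun c0 => all (fun r => (r == c0) || look t c0 r) (iota 0 n)) (iota 0 n).
Definition cornerTab g n v :=
  has (fun u => (u != v) && all (fun w => adjn g v w ==> adjn g u w) (iota 0 n)) (iota 0 n).
Definition gcode (code : seq (seq bool)) i j :=
  if i < j then nth false (nth [::] code j) i else nth false (nth [::] code i) j.
Definition mat code n :=
  [seq [seq (i == j) || gcode code i j | j <- iota 0 n] | i <- iota 0 n].
Fixpoint allbits k : seq (seq bool) :=
  if k is k'.+1 then [seq b :: l | b <- [:: true; false], l <- allbits k'] else [:: [::]].
Fixpoint dcodes n : seq (seq (seq bool)) :=
  if n is n'.+1 then
    flatten [seq [seq rcons L b | b <- allbits n' &
               (n' == 0) || cornerTab (look (mat (rcons L b) n)) n n'] | L <- dcodes n']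
  else [:: [::]].
Definition checkH (cH : seq (seq bool)) :=
  if captTab 6 (fW (mat cH 6) 6 2) then true else
  all (fun cS => let AG := mat (rcons cH cS) 7 in
         if cornerTab (look AG) 7 6 then captTab 7 (fW AG 7 3) else true) (allbits 6).
Definition checkAll := all checkH (dcodes 6).

Lemma size_orrow a b : size (orrow a b) = minn (size a) (size b).
Proof.
elim: a b => [|x a IH] [|y b] /=; rewrite ?min0n ?minn0 //.
by rewrite IH minnSS.
Qed.

Lemma nth_orrow a b j : size a = size b ->
  nth false (orrow a b) j = nth false a j || nth false b j.
Proof.
elim: a b j => [|x a IH] [|y b] j //= Hs; try (exfalso; lia).
  by rewrite nth_nil.
case: j => [|j] //=; apply: IH; lia.
Qed.

Lemma all_iota1 (P : nat -> bool) n :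
  all P (iota 1 n) = all (fun r => P r.+1) (iota 0 n).
Proof. by rewrite -[1]/(1 + 0) iotaDl all_map. Qed.

Lemma has_iota1 (P : nat -> bool) n :
  has P (iota 1 n) = has (fun r => P r.+1) (iota 0 n).
Proof. by rewrite -[1]/(1 + 0) iotaDl has_map. Qed.

Lemma all_iotaS (P : nat -> bool) n :
  all P (iota 0 n.+1) = P 0 && all (fun r => P r.+1) (iota 0 n).
Proof.
by rewrite /= -[1]/(1 + 0) iotaDl all_map.
Qed.

Lemma has_iotaS (P : nat -> bool) n :
  has P (iota 0 n.+1) = P 0 || has (fun r => P r.+1) (iota 0 n).
Proof.
by rewrite /= -[1]/(1 + 0) iotaDl has_map.
Qed.

Lemma all3_iota n a b c : size a = n -> size b = n -> size c = n ->
  all3 a b c = all (fun r => nth false a r ==> (nth false b r || nth false c r)) (iota 0 n).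
Proof.
elim: n a b c => [|n IH] [|x a] [|y b] [|z c] //= Ha Hb Hc.
by rewrite all_iota1 (IH a b c) //; lia.
Qed.

Lemma size_foldrow arow U acc : (forall u, u \in U -> size u = size acc) ->
  size (foldrow arow U acc) = size acc.
Proof.
elim: arow U acc => [|a ar IH] [|u U] acc //= HU.
rewrite IH; last first.
  move=> u' Hu'; rewrite (HU u') ?inE ?Hu' ?orbT //.
  by case: a => //; rewrite size_orrow (HU u) ?inE ?eqxx // minnn.
by case: a => //; rewrite size_orrow (HU u) ?inE ?eqxx // minnn.
Qed.

Lemma foldrow_nth arow U acc j : size arow = size U ->
  (forall u, u \in U -> size u = size acc) ->
  nth false (foldrow arow U acc) j =
  nth false acc j || has (fun c => nth false arow c && nth false (nth [::] U c) j)
                         (iota 0 (size arow)).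
Proof.
elim: arow U acc => [|a ar IH] [|u U] acc //= Hs0 HU; try (exfalso; lia).
  by rewrite orbF.
have Hs : size ar = size U by case: Hs0.
have Hu : size u = size acc by rewrite HU ?inE ?eqxx.
rewrite IH //; last first.
  move=> u' Hu'; rewrite (HU u') ?inE ?Hu' ?orbT //.
  by case: a => //; rewrite size_orrow Hu minnn.
rewrite has_iota1.
case: a => /=; last by [].
by rewrite nth_orrow // orbA [nth false u j || _]orbC.
Qed.

Lemma size_unitv n i : size (unitv n i) = n.
Proof. by elim: n i => [|n IH] [|i] //=; rewrite ?size_nseq ?IH. Qed.

Lemma nth_unitv n i j : j < n -> nth false (unitv n i) j = (i == j).
Proof.
elim: n i j => [|n IH] [|i] [|j] //= Hj.
- by rewrite nth_nseq if_same.
- by rewrite IH.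
Qed.

Lemma nth_idm n i : i < n -> nth [::] (idm n) i = unitv n i.
Proof. by move=> Hi; rewrite /idm (nth_map 0) ?size_iota // nth_iota. Qed.

Lemma size_idm n : size (idm n) = n.
Proof. by rewrite /idm size_map size_iota. Qed.

Definition wf n (t : seq (seq bool)) := (size t == n) && all (fun r => size r == n) t.

Lemma wf_size n t : wf n t -> size t = n.
Proof. by case/andP => /eqP. Qed.

Lemma wf_row n t r : wf n t -> r \in t -> size r = n.
Proof. by case/andP => _ /allP H /H /eqP. Qed.

Lemma wf_nth n t i : wf n t -> i < n -> size (nth [::] t i) = n.
Proof. by move=> H Hi; apply: (wf_row H); rewrite mem_nth // (wf_size H). Qed.

Section Step.
Variables (n : nat) (A T : seq (seq bool)).
Hypotheses (HA : wf n A) (HT : wf n T).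

Local Notation I := (idm n).
Local Notation S := [seq [seq all3 ar p.1 p.2 | ar <- A] | p <- zip I T].
Local Notation U := [seq orrow p.1 p.2 | p <- zip I S].

Lemma size_S : size S = n.
Proof. by rewrite size_map size_zip size_idm (wf_size HT) minnn. Qed.

Lemma size_U : size U = n.
Proof. by rewrite size_map size_zip size_idm size_S minnn. Qed.

Lemma nth_S c : c < n -> nth [::] S c = [seq all3 ar (unitv n c) (nth [::] T c) | ar <- A].
Proof.
move=> Hc; rewrite (nth_map ([::], [::])) ?size_zip ?size_idm ?(wf_size HT) ?minnn //.
by rewrite nth_zip ?size_idm ?(wf_size HT) //= nth_idm.
Qed.

Lemma nth_U c : c < n -> nth [::] U c = orrow (unitv n c) (nth [::] S c).
Proof.
move=> Hc; rewrite (nth_map ([::], [::])) ?size_zip ?size_idm ?size_S ?minnn //.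
by rewrite nth_zip ?size_idm ?size_S //= nth_idm.
Qed.

Lemma rows_U u : u \in U -> size u = n.
Proof.
case/(nthP [::]) => c; rewrite size_U => Hc <-.
by rewrite nth_U // size_orrow size_unitv nth_S // size_map (wf_size HA) minnn.
Qed.

Lemma wf_fstep : wf n (fstep A I T (nseq n false)).
Proof.
apply/andP; split; first by rewrite size_map (wf_size HA).
apply/allP => r /mapP[ar Har ->]; rewrite size_foldrow ?size_nseq //.
by move=> u Hu; rewrite rows_U // size_nseq.
Qed.

Lemma look_fstep i j : i < n -> j < n ->
  look (fstep A I T (nseq n false)) i j =
  has (fun c' => look A i c' && ((c' == j) ||
     all (fun r' => look A j r' ==> ((r' == c') || look T c' r')) (iota 0 n))) (iota 0 n).
Proof.
move=> Hi Hj; rewrite /look /fstep (nth_map [::]) ?(wf_size HA) //.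
rewrite foldrow_nth ?(wf_nth HA) ?size_U //; last first.
  by move=> u Hu; rewrite rows_U // size_nseq.
rewrite nth_nseq if_same orFb.
apply: eq_in_has => c; rewrite mem_iota add0n => /andP[_ Hc].
congr (_ && _); rewrite nth_U // nth_orrow; last first.
  by rewrite size_unitv nth_S // size_map (wf_size HA).
rewrite nth_unitv // nth_S // (nth_map [::]) ?(wf_size HA) //.
rewrite (all3_iota (n := n)) ?(wf_nth HA) ?(wf_nth HT) ?size_unitv //.
congr (_ || _); apply: eq_in_all => r; rewrite mem_iota add0n => /andP[_ Hr].
by rewrite nth_unitv // eq_sym.
Qed.

End Step.

Lemma wf_zero n : wf n (nseq n (nseq n false)).
Proof.
apply/andP; split; first by rewrite size_nseq.
by apply/allP => r; rewrite mem_nseq => /andP[_ /eqP ->]; rewrite size_nseq.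
Qed.

Lemma wf_fW A n k : wf n A -> wf n (fW A n k).
Proof.
move=> HA; elim: k => [|k IH]; first exact: wf_zero.
by rewrite /fW iterS -/(fW A n k); apply: wf_fstep.
Qed.

Lemma mem_allbits l : l \in allbits (size l).
Proof.
elim: l => [|b l IH] //=.
case: b; rewrite !mem_cat; apply/orP; [left|right; apply/orP; left];
  by apply/mapP; exists l.
Qed.

Section Transfer.
Variables (T : finType) (e : rel T) (s : seq T) (x0 : T).
Hypothesis Hu : uniq s.
Hypothesis Hs : forall x, x \in s.
Variable n : nat.
Hypothesis Hn : size s = n.
Variable A : seq (seq bool).
Hypothesis HAwf : wf n A.
Hypothesis HA : forall i j, i < n -> j < n ->
  look A i j = adj e (nth x0 s i) (nth x0 s j).

Lemma index_lt x : index x s < n.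
Proof. by rewrite -Hn index_mem. Qed.

Lemma has_s (P : pred T) : has (fun i => P (nth x0 s i)) (iota 0 n) = [exists x, P x].
Proof.
rewrite -(has_map (nth x0 s) P) -Hn -/(mkseq _ _) mkseq_nth.
apply/hasP/existsP => [[x _ Hx]|[x Hx]]; first by exists x.
by exists x.
Qed.

Lemma all_s (P : pred T) : all (fun i => P (nth x0 s i)) (iota 0 n) = [forall x, P x].
Proof.
rewrite -(all_map (nth x0 s) P) -Hn -/(mkseq _ _) mkseq_nth.
apply/allP/forallP => [H x|H x _]; [exact: H| exact: H].
Qed.

Lemma eq_nth_s i j : i < n -> j < n -> (nth x0 s i == nth x0 s j) = (i == j).
Proof. by move=> Hi Hj; rewrite nth_uniq // Hn. Qed.

Lemma fW_ok k i j : i < n -> j < n ->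
  look (fW A n k) i j = Wn e k (nth x0 s i) (nth x0 s j).
Proof.
elim: k i j => [|k IH] i j Hi Hj.
  by rewrite /look /fW /= nth_nseq Hi nth_nseq if_same.
rewrite /fW iterS -/(fW A n k) look_fstep ?wf_fW // WnS -has_s.
apply: eq_in_has => c; rewrite mem_iota add0n => /andP[_ Hc].
rewrite HA // eq_nth_s // -all_s.
congr (_ && (_ || _)); apply: eq_in_all => r; rewrite mem_iota add0n => /andP[_ Hr].
by rewrite HA // eq_nth_s // IH.
Qed.

Lemma captTab_ok k : captTab n (fW A n k) -> captW e k.
Proof.
case/hasP => c0; rewrite mem_iota add0n => /andP[_ Hc0] /allP H.
exists (nth x0 s c0) => r Hr.
have Hri := index_lt r.
move: (H (index r s)); rewrite mem_iota add0n Hri => /(_ isT).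
rewrite fW_ok // nth_index // -(eq_nth_s Hri Hc0) nth_index //.
by rewrite (negbTE Hr).
Qed.

Lemma adjn_A a w : a < n -> w < n -> adjn (look A) a w = adj e (nth x0 s a) (nth x0 s w).
Proof. by move=> Ha Hw; rewrite /adjn HA // /adj -eq_nth_s // orbA orbb. Qed.

Lemma cornerTab_ok i : i < n -> [exists u, corner e (nth x0 s i) u] ->
  cornerTab (look A) n i.
Proof.
move=> Hi /existsP[u /andP[Hvu /forallP H]]; apply/hasP; exists (index u s).
  by rewrite mem_iota add0n index_lt.
rewrite -(eq_nth_s (index_lt u) Hi) nth_index // eq_sym Hvu /=.
apply/allP => w; rewrite mem_iota add0n => /andP[_ Hw].
by rewrite !adjn_A ?index_lt // nth_index.
Qed.

End Transfer.

Lemma checkAll_true : checkAll = true.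
Proof. vm_cast_no_check (erefl true). Qed.


Definition codeN (F : nat -> nat -> bool) N :=
  [seq [seq F k a | k <- iota 0 a] | a <- iota 0 N].
Definition adjF (F : nat -> nat -> bool) i j := (i == j) || (if i < j then F i j else F j i).


Lemma look_map2 (G : nat -> nat -> bool) n i j : i < n -> j < n ->
  look [seq [seq G c r | r <- iota 0 n] | c <- iota 0 n] i j = G i j.
Proof.
move=> Hi Hj; rewrite /look (nth_map 0) ?size_iota // nth_iota //.
by rewrite (nth_map 0) ?size_iota // nth_iota.
Qed.

Lemma look_mat F N i j : i < N -> j < N -> look (mat (codeN F N) N) i j = adjF F i j.
Proof.
move=> Hi Hj; rewrite /mat look_map2 // /gcode /adjF /codeN.
case: (ltngtP i j) => [Hij|Hij|->]; rewrite ?eqxx //.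
  by rewrite (nth_map 0) ?size_iota // nth_iota // (nth_map 0) ?size_iota // nth_iota.
by rewrite (nth_map 0) ?size_iota // nth_iota // (nth_map 0) ?size_iota // nth_iota.
Qed.

Lemma wf_mat code N : wf N (mat code N).
Proof.
apply/andP; split; first by rewrite size_map size_iota.
by apply/allP => r /mapP[i _ ->]; rewrite size_map size_iota.
Qed.

Lemma codeN_split F N : codeN F N.+1 = rcons (codeN F N) [seq F k N | k <- iota 0 N].
Proof. by rewrite /codeN -addn1 iotaD cats1 map_rcons. Qed.

Lemma adjn_F F N a w : a < N -> w < N ->
  adjn (look (mat (codeN F N) N)) a w = adjF F a w.
Proof. by move=> Ha Hw; rewrite /adjn look_mat // /adjF orbA orbb. Qed.

Lemma codeN_dcodes F N :
  (forall i, 0 < i < N -> exists2 j, j < i & forall k, k <= i -> adjF F i k -> adjF F j k) ->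
  codeN F N \in dcodes N.
Proof.
elim: N => [|N IH] Hd; first by [].
rewrite codeN_split /=; apply/flattenP.
exists [seq rcons (codeN F N) b | b <- allbits N &
          (N == 0) || cornerTab (look (mat (rcons (codeN F N) b) N.+1)) N.+1 N].
  apply/mapP; exists (codeN F N) => //; apply: IH => i /andP[Hi0 Hi].
  by apply: Hd; rewrite Hi0 ltnW.
apply: map_f; rewrite mem_filter.
have Hb : [seq F k N | k <- iota 0 N] \in allbits N.
  by have := mem_allbits [seq F k N | k <- iota 0 N]; rewrite size_map size_iota.
rewrite Hb andbT -codeN_split.
case: (posnP N) => [->//|HN]; apply/orP; right.
have HN' : 0 < N < N.+1 by rewrite HN ltnSn.
have [j Hj H] := Hd N HN'.
apply/hasP; exists j; first by rewrite mem_iota add0n; lia.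
apply/andP; split; first by rewrite (ltn_eqF Hj).
apply/allP => w; rewrite mem_iota add0n => /andP[_ Hw].
rewrite !adjn_F //; try lia.
by apply/implyP; apply: H.
Qed.

Definition dism (T : finType) (e : rel T) (x0 : T) (s : seq T) :=
  forall i, 0 < i < size s -> exists2 j, j < i &
    forall k, k <= i -> adj e (nth x0 s i) (nth x0 s k) -> adj e (nth x0 s j) (nth x0 s k).

Section Ext.
Variables (T : finType) (e : rel T) (v u : T).
Hypothesis esym : symmetric e.
Hypothesis Hc : corner e v u.
Variable sH : seq {x : T | x != v}.
Hypothesis HuH : uniq sH.
Hypothesis HsH : forall x, x \in sH.

Local Notation s := (rcons (map val sH) v).

Lemma ext_uniq : uniq s.
Proof.
rewrite rcons_uniq map_inj_uniq ?HuH ?andbT; last exact: val_inj.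
by apply/mapP => -[x _ Hx]; have := valP x; rewrite -Hx eqxx.
Qed.

Lemma ext_mem x : x \in s.
Proof.
rewrite mem_rcons inE; case: (eqVneq x v) => //= Hx.
by apply/mapP; exists (Sub x Hx).
Qed.

Lemma ext_nth x0 y0 i : i < size sH -> nth x0 s i = val (nth y0 sH i).
Proof. by move=> Hi; rewrite nth_rcons size_map Hi (nth_map y0). Qed.

Lemma ext_last x0 : nth x0 s (size sH) = v.
Proof. by rewrite nth_rcons size_map ltnn eqxx. Qed.

Lemma ext_dism x0 y0 : dism (@eH _ e v) y0 sH -> dism e x0 s.
Proof.
move=> Hd i; rewrite size_rcons size_map => /andP[Hi0 Hi].
have [Hlt|Hge] := ltnP i (size sH); last first.
  have Ei : i = size sH by apply/eqP; rewrite eqn_leq Hge andbT -ltnS.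
  have Hu : u \in map val sH.
    by apply/mapP; exists (Sub u (Huv Hc)).
  exists (index u (map val sH)); first by rewrite Ei -(size_map val) index_mem.
  move=> k Hk; rewrite Ei ext_last [nth x0 _ (index _ _)]nth_rcons index_mem Hu nth_index //.
  exact: Hdom.
have Hi' : 0 < i < size sH by rewrite Hi0 Hlt.
have [j Hj H] := Hd i Hi'.
exists j => // k Hk.
rewrite !(ext_nth x0 y0) ?(leq_ltn_trans Hk Hlt) ?(ltn_trans Hj Hlt) // -!adjH.
exact: H.
Qed.

End Ext.

Lemma dism_exists n : forall (T : finType) (e : rel T), symmetric e -> #|T| = n.+1 ->
  (exists K, captW e K) -> forall x0 : T,
  exists s, [/\ uniq s, forall x, x \in s, size s = n.+1 & dism e x0 s].
Proof.
elim: n => [|n IH] T e esym HT [K HK] x0.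
  have [x Hx] := fintype1 HT.
  exists [:: x0]; split => //.
    by move=> y; rewrite (Hx y) (Hx x0) inE.
  by move=> [|[|i]] //= /andP[].
have [v [u Hc]] : exists v u, corner e v u by apply: (corner_exists HK); rewrite HT.
have [sH [HuH HsH HszH HdH]] :
  exists sH, [/\ uniq sH, forall x, x \in sH, size sH = n.+1 & dism (@eH _ e v) (u' Hc) sH].
  apply: IH.
  - exact: symH.
  - by rewrite card_sT HT.
  - by exists K; exact: (captW_retract esym Hc HK).
exists (rcons (map val sH) v); split.
- exact: ext_uniq.
- exact: ext_mem.
- by rewrite size_rcons size_map HszH.
- exact: (ext_dism Hc HsH x0 HdH).
Qed.


Lemma base (T : finType) (e : rel T) : symmetric e -> #|T| = 7 ->
  (exists K, captW e K) -> captW e 3.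
Proof.
move=> esym HT [K HK].
have [v [u Hc]] : exists v u, corner e v u by apply: (corner_exists HK); rewrite HT.
pose x0H := u' Hc.
have [sH [HuH HsH HszH HdH]] : exists sH, [/\ uniq sH, forall x, x \in sH,
    size sH = 6 & dism (@eH _ e v) x0H sH].
  apply: (dism_exists (n:=5)).
  - exact: symH.
  - by rewrite card_sT HT.
  - by exists K; exact: (captW_retract esym Hc HK).
pose s := rcons (map val sH) v.
have Hu : uniq s := ext_uniq HuH.
have Hs : forall x, x \in s := ext_mem HsH.
have Hsz : size s = 7 by rewrite size_rcons size_map HszH.
have HnthH : forall i, i < 6 -> nth v s i = val (nth x0H sH i).
  by move=> i Hi; apply: ext_nth; rewrite HszH.
have Hnth6 : nth v s 6 = v by have := ext_last sH v; rewrite HszH.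
pose F := fun k a => e (nth v s k) (nth v s a).
have HF : forall i j, i < 7 -> j < 7 -> adjF F i j = adj e (nth v s i) (nth v s j).
  move=> i j Hi Hj; rewrite /adjF /adj nth_uniq ?Hsz //.
  by case: (i == j) => //=; case: (i < j) => //; rewrite /F esym.
pose cH := codeN F 6.
pose cS := [seq F k 6 | k <- iota 0 6].
have HcG : rcons cH cS = codeN F 7 by rewrite /cH /cS -codeN_split.
have HAH : forall i j, i < 6 -> j < 6 ->
    look (mat cH 6) i j = adj (@eH _ e v) (nth x0H sH i) (nth x0H sH j).
  move=> i j Hi Hj; rewrite look_mat // adjH -!HnthH //; apply: HF; lia.
have HAG : forall i j, i < 7 -> j < 7 ->
    look (mat (rcons cH cS) 7) i j = adj e (nth v s i) (nth v s j).
  by move=> i j Hi Hj; rewrite HcG look_mat // HF.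
have Hmem : cH \in dcodes 6.
  apply: codeN_dcodes => i /andP[Hi0 Hi].
  have Hi' : 0 < i < size sH by rewrite HszH Hi0.
  have [j Hj H] := HdH i Hi'.
  exists j => // k Hk.
  have Hj6 : j < 6 by lia.
  have Hk6 : k < 6 by lia.
  rewrite !HF; try lia.
  rewrite !HnthH // -!adjH; exact: H.
have Hck := (allP checkAll_true) cH Hmem.
move: Hck; rewrite /checkH; case: ifP => [H2 _|_ /allP Hall].
  apply: (captW_shadow esym Hc).
  exact: (captTab_ok HuH HsH HszH (wf_mat _ _) HAH H2).
have Hcs : cS \in allbits 6.
  by have := mem_allbits cS; rewrite size_map size_iota.
have Hex : [exists u0, corner e (nth v s 6) u0] by rewrite Hnth6; apply/existsP; exists u.
have Hcorn : cornerTab (look (mat (rcons cH cS) 7)) 7 6.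
  exact: (cornerTab_ok Hu Hs Hsz HAG (i:=6) isT Hex).
have := Hall cS Hcs; cbv zeta; rewrite Hcorn => H3.
exact: (captTab_ok Hu Hs Hsz (wf_mat _ _) HAG H3).
Qed.

Lemma single n : forall (T : finType) (e : rel T), symmetric e -> #|T| = 7 + n ->
  (exists K, captW e K) -> captW e (3 + n).
Proof.
elim: n => [|n IH] T e esym HT HK; first exact: base.
case: HK => K HK.
have [v [u Hc]] : exists v u, corner e v u by apply: (corner_exists HK); rewrite HT.
apply: (captW_shadow esym Hc); apply: (IH _ (@eH _ e v)).
- exact: symH.
- by rewrite card_sT HT.
- by exists K; exact: (captW_retract esym Hc HK).
Qed.


Section Multi.
Variables (T : finType) (e : rel T) (m : nat).
Local Notation cww := (@cop_wins_within T e m).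

Lemma cww_mono k c R : cww k c R -> forall k', k <= k' -> cww k' c R.
Proof.
elim=> {k c R} [k c R H k' _|k c R c' Hc Hall IH [|k'] // Hk]; first exact: cww_done.
by apply: (@cww_step _ _ _ k' c R c') => // R2 HR; apply: IH.
Qed.

Definition sub (R' R : 'I_m -> option T) := forall i, R i = None -> R' i = None.
Definition alive (R : 'I_m -> option T) := #|[set i | R i != None]|.

Lemma capture_None c (R : 'I_m -> option T) i : R i = None -> capture c R i = None.
Proof. by move=> Hi; rewrite /capture Hi; case: (_ == _). Qed.

Lemma robber_move_None (R R2 : 'I_m -> option T) i :
  robber_move e R R2 -> R i = None -> R2 i = None.
Proof. by move=> H Hi; have := H i; rewrite Hi. Qed.

Lemma alive_sub R' R : sub R' R -> alive R' <= alive R.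
Proof.
move=> H; apply: subset_leq_card; apply/subsetP => i; rewrite !inE.
by apply: contra => /eqP /H ->.
Qed.

Lemma alive_lt R' R i : sub R' R -> R' i = None -> R i != None -> alive R' < alive R.
Proof.
move=> H Hi Hr; apply: proper_card; apply/properP; split.
  by apply/subsetP => j; rewrite !inE; apply: contra => /eqP /H ->.
by exists i; rewrite !inE // Hi.
Qed.

Lemma alive0 R : alive R <= 0 -> forall i, R i = None.
Proof.
move=> H i; move: H; rewrite leqn0 cards_eq0 => /eqP H0.
by have := in_set0 i; rewrite -H0 inE => /negbT; rewrite negbK => /eqP.
Qed.

Lemma alive_gt0 R i : R i != None -> 0 < alive R.
Proof. by move=> Hi; apply/card_gt0P; exists i; rewrite inE. Qed.

Lemma alive_le R : alive R <= m.
Proof. by rewrite -[m]card_ord max_card. Qed.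

Lemma walk d c c0 B R : within e d c c0 ->
  (forall R', sub R' R -> cww B c0 R') -> cww (d + B) c R.
Proof.
elim: d c R => [|d IH] c R /existsP[[p Hp] /andP[Hpath /eqP Hl]] H.
  move: Hp Hpath Hl; case: p => //= _ _ Hl; rewrite Hl; exact: H.
move: Hp Hpath Hl; case: p => [|x p] //= Hp /andP[Hcx Hpath] Hl.
rewrite addSn; apply: (@cww_step _ _ _ (d + B) c R x) => // R2 Hmv.
apply: IH.
  by apply/existsP; exists (Tuple Hp); rewrite /= Hpath Hl eqxx.
move=> R' Hsub; apply: H => i Hi; apply: Hsub; apply: capture_None.
by apply: (robber_move_None Hmv); apply: capture_None.
Qed.

Lemma chase k c R i r J : R i = Some r -> Wn e k c r ->
  (forall c' R', sub R' R -> R' i = None -> cww J c' R') -> cww (k + J) c R.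
Proof.
elim: k c R r => [//|k IH] c R r HRi; rewrite WnS => /existsP[c' /andP[Hc H]] Hcont.
rewrite addSn; apply: (@cww_step _ _ _ (k + J) c R c') => // R2 Hmv.
have Hsub : sub (capture c' R2) R.
  move=> j Hj; apply: capture_None; apply: (robber_move_None Hmv); exact: capture_None.
have Hdone : capture c' R2 i = None -> cww (k + J) c' (capture c' R2).
  move=> Hi; apply: (cww_mono (Hcont _ _ Hsub Hi)); exact: leq_addl.
have [Erc|Nrc] := eqVneq r c'.
  apply: Hdone; apply: capture_None; apply: (robber_move_None Hmv).
  by rewrite /capture HRi Erc eqxx.
have := Hmv i; rewrite /capture HRi eqSome (negbTE Nrc) => -[w Hw Hrw].
have [Ewc|Nwc] := eqVneq w c'.
  by apply: Hdone; rewrite /capture Hw Ewc eqxx.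
move: H; rewrite eq_sym (negbTE Nrc) orFb => /forallP /(_ w).
rewrite Hrw (negbTE Nwc) /= => HW.
apply: (IH c' _ w) => //.
  by rewrite /capture Hw eqSome (negbTE Nwc).
move=> c'' R' Hs Hi; apply: Hcont => // j Hj; exact: Hs (Hsub j Hj).
Qed.

Lemma claim M D c0 (HW : forall r, Wn e M c0 r)
  (HD : forall c, exists2 d, d <= D & within e d c c0) :
  forall a R, alive R <= a -> cww (a * M + a.-1 * D) c0 R.
Proof.
elim=> [|a IH] R Ha; first by apply: cww_done; apply: alive0.
case: (boolP [exists i, R i != None]) => [/existsP[i Hi]|Hn]; last first.
  apply: cww_done => i; move: Hn; rewrite negb_exists => /forallP /(_ i).
  by rewrite negbK => /eqP.
case HRi: (R i) => [r|]; last by rewrite HRi in Hi.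
have -> : a.+1 * M + a.+1.-1 * D = M + (a * M + a * D) by rewrite mulSn /=; lia.
apply: (chase HRi (HW r)) => c' R' Hsub Hi'.
case: (boolP [exists j, R' j != None]) => [/existsP[j Hj]|Hn]; last first.
  apply: cww_done => j; move: Hn; rewrite negb_exists => /forallP /(_ j).
  by rewrite negbK => /eqP.
have Hlt := alive_lt Hsub Hi' Hi.
have Ha' : alive R' <= a by move: Hlt Ha; lia.
have Ha1 : 0 < a by move: (alive_gt0 Hj) Ha'; lia.
case: (HD c') => d Hd Hw.
apply: (cww_mono (walk (B := a * M + a.-1 * D) Hw _)).
  by move=> R'' Hs; apply: IH; exact: leq_trans (alive_sub Hs) Ha'.
move: Ha1 Hd; case: a {IH Ha Ha' Hlt} => [//|b] _ /= Hd.
rewrite mulSn; lia.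
Qed.

End Multi.

Section Dist.
Variables (T : finType) (e : rel T).

Lemma dist_ok c y : connect e c y -> within e (dist e c y) c y.
Proof.
move/connectP => [p Hp ->].
case: (shortenP Hp) => p' Hp' Huq _.
have Hsz : size p' < #|T|.
  by have := max_card (mem (c :: p')); rewrite (card_uniqP Huq).
have Hw : within e (size p') c (last c p').
  apply/existsP; exists (in_tuple p'); rewrite /= eqxx andbT.
  by apply: sub_path Hp' => x z H; rewrite /adj H orbT.
have Hh : has (fun k => within e k c (last c p')) (iota 0 #|T|).
  by apply/hasP; exists (size p'); rewrite // mem_iota.
have Hf : find (fun k => within e k c (last c p')) (iota 0 #|T|) < #|T|.
  by rewrite -[X in _ < X](size_iota 0 #|T|) -has_find.
by rewrite /dist; have := nth_find 0 Hh; rewrite nth_iota // add0n.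
Qed.

Lemma dist_diam c y : dist e c y <= diam e.
Proof.
rewrite /diam; apply: leq_trans (leq_bigmax c).
exact: leq_bigmax.
Qed.

End Dist.


Theorem mainTheorem2 (T : finType) (e : rel T) (e_sym : symmetric e)
  (e_conn : forall x y : T, connect e x y) (hn : 7 <= #|T|)
  (hcw : copwin e) (m : nat) (hm : 1 <= m) :
  capt_le e m ((m - 1) * diam e + m * (#|T| - 4)).
Proof.
have HK : exists K, captW e K.
  by case: hcw => N HN; exists N; exact: capt_le_captW.
have HT : #|T| = 7 + (#|T| - 7) by lia.
have [c0 Hc0] := single e_sym HT HK.
have HM : 3 + (#|T| - 7) = (#|T| - 4) by lia.
rewrite HM in Hc0.
have HW : forall r, Wn e (#|T| - 4) c0 r.
  move=> r; have [->|Hr] := eqVneq r c0; last exact: Hc0.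
  have -> : #|T| - 4 = (#|T| - 5).+1 by lia.
  by apply: Wn_adj; apply: adjxx.
have HD : forall c, exists2 d, d <= diam e & within e d c c0.
  by move=> c; exists (dist e c c0); [exact: dist_diam | exact: dist_ok].
exists c0 => R0.
have := claim HW HD (alive_le (capture c0 (fun i => Some (R0 i)))).
by rewrite addnC -subn1.
Qed.
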